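(* Let $\Omega\in\mathscr A$ with $\mathfrak m(\Omega)<+\infty$ and for $\kappa>0$ let $\mathcal J_\kappa[F]:=P(F)-\kappa\,\mathfrak m(F)$ for measurable $F\subset\Omega$. If (P.4) and (P.5) hold, then $\mathcal J_\kappa$ admits a minimizer among measurable subsets of $\Omega$. If in addition (P.1) holds, then: (i) if $\mathcal J_\kappa$ has a minimizer $E$ with $\mathfrak m(E)>0$, then $\Omega$ is $1$-admissible and $\kappa\ge h_1(\Omega)$; (ii) if $\Omega$ is $1$-admissible and $\kappa>h_1(\Omega)$, then $\mathcal J_\kappa$ has a minimizer with positive $\mathfrak m$-measure; (iii) if $\Omega$ has a $1$-Cheeger set, then $\mathcal J_\kappa$ has a minimizer with positive $\mathfrak m$-measure if and only if $\kappa\ge h_1(\Omega)$.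
   Context: $(X,\mathscr A,\mathfrak m)$ is a non-negative $\sigma$-finite measure space; for $A,B\in\mathscr A$, ''$A\subset B$'' means $\mathfrak m(A\setminus B)=0$. $P\colon\mathscr A\to[0,+\infty]$ is a proper functional. (P.1): $P(\emptyset)=0$. (P.4): if $\chi_{E_k}\to\chi_E$ in $L^1(X,\mathfrak m)$ then $P(E)\le\liminf_k P(E_k)$. (P.5): for every $c\ge0$, $\{\chi_E:E\in\mathscr A,\ P(E)\le c\}$ is compact in $L^1(X,\mathfrak m)$. $\Omega$ is $1$-admissible if it contains some $E$ with $0<\mathfrak m(E)<+\infty$, $P(E)<+\infty$; $h_1(\Omega)=\inf\{P(E)/\mathfrak m(E): E\subset\Omega,\ 0<\mathfrak m(E)<+\infty,\ P(E)<+\infty\}$; a set attaining it is a $1$-Cheeger set of $\Omega$. *)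

(* Defs.v *)
From HB Require Import structures.
From mathcomp Require Import all_boot all_order all_algebra.
From mathcomp Require Import all_classical all_reals all_analysis.
Set Implicit Arguments. Unset Strict Implicit. Unset Printing Implicit Defensive.
Import Order.TTheory GRing.Theory Num.Theory.
Local Open Scope classical_set_scope.
Local Open Scope ring_scope.
Local Open Scope ereal_scope.

Section cheeger_defs.
Context (d : measure_display) (T : measurableType d) (R : realType)
  (mu : {measure set T -> \bar R}).

(* "A \subset B" in the paper's sense: mu (A \ B) = 0 *)
Definition aesub (A B : set T) : Prop := mu (A `\` B) = 0.

Definition L1_indic_cvg (E : nat -> set T) (F : set T) : Prop :=
  (fun k => \int[mu]_x (`| (\1_(E k) x : R) - \1_F x |%R)%:E) @ \oo --> 0.

(* P is proper: not identically +oo (values already in [0,+oo]) *)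
Definition P_proper (P : set T -> \bar R) : Prop :=
  (forall E, measurable E -> 0 <= P E) /\ exists E, measurable E /\ P E < +oo.

Definition P1 (P : set T -> \bar R) : Prop := P set0 = 0.

Definition P4 (P : set T -> \bar R) : Prop :=
  forall (E : nat -> set T) (F : set T),
    (forall k, measurable (E k)) -> measurable F ->
    L1_indic_cvg E F -> P F <= limn_einf (fun k => P (E k)).

(* compactness in L^1 (a metric space) of {chi_E : P E <= c}, stated
   sequentially: every sequence has an L^1-convergent subsequence whose
   limit is again of the form chi_F with P F <= c *)
Definition P5 (P : set T -> \bar R) : Prop :=
  forall c : R, (0 <= c)%R ->
  forall E : nat -> set T, (forall k, measurable (E k)) ->
    (forall k, P (E k) <= c%:E) ->
    exists (phi : nat -> nat) (F : set T),
      {homo phi : m n / (m < n)%N >-> (m < n)%N} /\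
      measurable F /\ P F <= c%:E /\ L1_indic_cvg (E \o phi) F.

Definition admissible_set (P : set T -> \bar R) (Om E : set T) : Prop :=
  measurable E /\ aesub E Om /\ 0 < mu E /\ mu E < +oo /\ P E < +oo.

Definition one_admissible (P : set T -> \bar R) (Om : set T) : Prop :=
  exists E, admissible_set P Om E.

Definition h1 (P : set T -> \bar R) (Om : set T) : \bar R :=
  ereal_inf [set ((fine (P E)) / (fine (mu E)))%R%:E | E in admissible_set P Om].

Definition cheeger_set (P : set T -> \bar R) (Om E : set T) : Prop :=
  admissible_set P Om E /\ ((fine (P E)) / (fine (mu E)))%R%:E = h1 P Om.

Definition Jk (P : set T -> \bar R) (kappa : R) (F : set T) : \bar R :=
  P F - kappa%:E * mu F.

Definition J_minimizer (P : set T -> \bar R) (kappa : R) (Om E : set T) : Prop :=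
  measurable E /\ aesub E Om /\
  forall F, measurable F -> aesub F Om -> Jk P kappa E <= Jk P kappa F.

End cheeger_defs.

(* Main.v *)
Require Import Defs.
From HB Require Import structures.
From mathcomp Require Import all_boot all_order all_algebra.
From mathcomp Require Import all_classical all_reals all_analysis measurable_realfun.
From mathcomp Require Import lra.
Import Order.TTheory GRing.Theory Num.Theory.
Local Open Scope classical_set_scope.
Local Open Scope ring_scope.
Local Open Scope ereal_scope.

Section helpers.
Context (d : measure_display) (T : measurableType d) (R : realType)
  (mu : {measure set T -> \bar R}).

Lemma meas_absind (A B : set T) : measurable A -> measurable B ->
  measurable_fun setT (fun x => (`|(\1_A x : R) - \1_B x|)%:E).
Proof.
move=> mA mB; apply/measurable_EFinP.
apply: (measurableT_comp (@normr_measurable R setT)).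
exact: measurable_funB (measurable_indic _) (measurable_indic _).
Qed.

Lemma muD_le_int {A B : set T} : measurable A -> measurable B ->
  mu (A `\` B) <= \int[mu]_x (`|(\1_B x : R) - \1_A x|)%:E.
Proof.
move=> mA mB.
rewrite -[A `\` B]setIT -integral_indic//; last exact: measurableD.
apply: (ge0_le_integral mu measurableT).
- by move=> x _; rewrite lee_fin.
- by apply/measurable_EFinP; exact: measurable_indic (measurableD mA mB).
- exact: meas_absind.
move=> x _; rewrite lee_fin !indicE.
rewrite in_setD.
have [xA|xA] := boolP (x \in A); have [xB|xB] := boolP (x \in B) => /=.
all: rewrite ?normr_ge0//.
by rewrite sub0r normrN normr1.
Qed.

Lemma mu_le_add {A B : set T} : measurable A -> measurable B ->
  mu A <= mu B + mu (A `\` B).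
Proof.
move=> mA mB.
have eA : A = (A `&` B) `|` (A `\` B).
  apply/seteqP; split => x /=; last by case=> -[].
  by case: (pselect (B x)) => Bx Ax; [left|right].
rewrite {1}eA (le_trans (measureU2 _ _ _)) ?leeD2r//.
- exact: measurableI.
- exact: measurableD.
- rewrite le_measure// ?inE; by [apply: measurableI|apply: subIsetr].
Qed.


Context (P : set T -> \bar R) (Om : set T) (kappa : R).
Hypotheses (HPp : P_proper P) (mOm : measurable Om) (OmF : mu Om < +oo)
  (k0 : (0 < kappa)%R).

Let M := fine (mu Om).
Let muOmE : mu Om = M%:E.
Proof. by rewrite fineK// ge0_fin_numE. Qed.

Lemma adm_le {F} : measurable F -> aesub mu F Om -> mu F <= M%:E.
Proof.
move=> mF aF; rewrite -muOmE (le_trans (mu_le_add mF mOm))//.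
by rewrite aF adde0.
Qed.

Lemma adm_muE {F} : measurable F -> aesub mu F Om -> mu F = (fine (mu F))%:E.
Proof.
move=> mF aF; rewrite fineK// ge0_fin_numE//.
by rewrite (le_lt_trans (adm_le mF aF))// ltry.
Qed.

Lemma JkE {F} : measurable F -> aesub mu F Om ->
  Jk mu P kappa F = P F - (kappa * fine (mu F))%:E.
Proof. by move=> mF aF; rewrite /Jk {1}(adm_muE mF aF) EFinM. Qed.

Lemma J_ge {F} : measurable F -> aesub mu F Om ->
  (- (kappa * M))%:E <= Jk mu P kappa F.
Proof.
move=> mF aF; rewrite JkE// EFinN -[X in X <= _]add0e; apply: leeB.
  exact: HPp.1.
rewrite lee_fin ler_pM2l//; have := adm_le mF aF.
by rewrite {1}(adm_muE mF aF) lee_fin.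
Qed.


Lemma le_limn_einf (u v : (\bar R)^nat) : (forall n, u n <= v n) ->
  limn_einf u <= limn_einf v.
Proof.
move=> uv; rewrite !limn_einf_lim; apply: lee_lim.
- exact: is_cvg_einfs.
- exact: is_cvg_einfs.
apply: nearW => n /=; apply: le_ereal_inf_tmp => _ [k /= nk <-].
apply: le_trans (uv k); apply: ereal_inf_lbound; by exists k.
Qed.

Lemma harmonic_anti (k j : nat) : (k <= j)%N -> (harmonic j <= harmonic k :> R)%R.
Proof.
move=> kj; rewrite /harmonic /= lef_pV2 ?posrE ?ltr0n// ler_nat; by [].
Qed.

Lemma incr_ge (phi : nat -> nat) : {homo phi : m n / (m < n)%N >-> (m < n)%N} ->
  forall k, (k <= phi k)%N.
Proof.
move=> hphi; elim=> [//|k IH]; apply: leq_ltn_trans IH (hphi _ _ _); by [].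
Qed.

Let S := [set Jk mu P kappa F | F in [set F | measurable F /\ aesub mu F Om]].

Lemma min_of_le E : measurable E -> aesub mu E Om -> Jk mu P kappa E <= ereal_inf S ->
  J_minimizer mu P kappa Om E.
Proof.
move=> mE aE hE; split => //; split => // F mF aF.
by apply: le_trans hE _; apply: ereal_inf_lbound; exists F.
Qed.

Lemma exists_min : P4 mu P -> P5 mu P -> exists E, J_minimizer mu P kappa Om E.
Proof.
move=> H4 H5.
have lb : (- (kappa * M))%:E <= ereal_inf S.
  by apply: le_ereal_inf_tmp => _ [F [mF aF] <-]; exact: J_ge.
have [mOO|mOO] := eqVneq (ereal_inf S) +oo.
  exists set0; apply: min_of_le => //.
  - by rewrite /aesub set0D measure0.
  - by rewrite mOO leey.
have mfin : ereal_inf S \is a fin_num.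
  rewrite fin_numE mOO andbT; apply/eqP => mN; move: lb; by rewrite mN.
set mr := fine (ereal_inf S).
have mE : ereal_inf S = mr%:E by rewrite fineK.
have : forall n, exists F, (measurable F /\ aesub mu F Om) /\
    Jk mu P kappa F < ereal_inf S + (harmonic n)%:E.
  move=> n; have [_ [F AF <-] hF] := lb_ereal_inf_adherent (harmonic_gt0 n) mfin.
  by exists F.
move=> /choice[E hE].
have mEn n : measurable (E n) by case: (hE n) => -[].
have aEn n : aesub mu (E n) Om by case: (hE n) => -[].
have PEn n : P (E n) = Jk mu P kappa (E n) + (kappa * fine (mu (E n)))%:E.
  by rewrite JkE// subeK.
have lbr : (- (kappa * M) <= mr)%R by rewrite -lee_fin -mE.
set c := (mr + 1 + kappa * M)%R.
have c0 : (0 <= c)%R.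
  rewrite /c; move: lbr; lra.
have PEc n : P (E n) <= c%:E.
  rewrite PEn /c EFinD; apply: leeD.
    apply: ltW; apply: (lt_le_trans (hE n).2).
    rewrite mE -EFinD lee_fin lerD2l /harmonic /= invr_le1 ?unitfE//.
    by rewrite ler1n.
  rewrite lee_fin ler_pM2l//; have := adm_le (mEn n) (aEn n).
  by rewrite {1}(adm_muE (mEn n) (aEn n)) lee_fin.
have [phi [F [hphi [mF [PFc cvgF]]]]] := H5 c c0 E mEn PEc.
set g := fun k => \int[mu]_x (`|(\1_((E \o phi) k) x : R) - \1_F x|)%:E.
have gF : g @ \oo --> 0 := cvgF.
have g0 k : 0 <= g k by apply: integral_ge0 => x _; rewrite lee_fin.
have FEg k : mu (F `\` E (phi k)) <= g k.
  exact: (muD_le_int mF (mEn (phi k))).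
have EFg k : mu (E (phi k) `\` F) <= g k.
  rewrite /g; under eq_integral do rewrite distrC.
  exact: (muD_le_int (mEn (phi k)) mF).
have aF : aesub mu F Om.
  apply/eqP; rewrite eq_le measure_ge0 andbT.
  apply: (cvge_to_ge gF); apply: nearW => k.
  apply: (le_trans (mu_le_add (measurableD mF mOm) (measurableD (mEn (phi k)) mOm))).
  rewrite (aEn (phi k)) add0e (le_trans _ (FEg k))//.
  rewrite le_measure ?inE//.
  - by apply: measurableD; [exact: measurableD|exact: measurableD].
  - exact: measurableD.
  - by move=> x [[Fx nOx] nEO]; split => // Ex; apply: nEO.
set fF := fine (mu F).
have muFE : mu F = fF%:E := adm_muE mF aF.
set b := fun k => mr%:E + (harmonic k)%:E + kappa%:E * (mu F + g k).
have bnd k : P ((E \o phi) k) <= b k.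
  rewrite /= PEn /b; apply: leeD.
    apply: ltW; apply: (lt_le_trans (hE (phi k)).2).
    by rewrite mE leeD2l// lee_fin harmonic_anti// incr_ge.
  rewrite EFinM -(adm_muE (mEn (phi k)) (aEn (phi k))).
  apply: lee_wpmul2l; first by rewrite lee_fin ltW.
  by apply: (le_trans (mu_le_add (mEn (phi k)) mF)); rewrite leeD2l.
have bcvg : b @ \oo --> mr%:E + 0 + kappa%:E * (mu F + 0).
  apply: cvgeD.
  - by rewrite fin_num_adde_defr.
  - apply: cvgeD; [by rewrite fin_num_adde_defr|exact: cvg_cst|exact: cvge_harmonic].
  - apply: cvgeZl => //; apply: cvgeD; [by rewrite muFE fin_num_adde_defr|exact: cvg_cst|exact: gF].
have := H4 (E \o phi) F (fun k => mEn (phi k)) mF cvgF.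
move=> /le_trans /(_ (le_limn_einf _ _ bnd)).
rewrite (cvg_limn_einf_sup bcvg).1 !adde0 => PFb.
exists F; apply: min_of_le => //.
by rewrite JkE// mE leeBlDr// EFinM -muFE.
Qed.

Lemma aesub0 : aesub mu set0 Om.
Proof. by rewrite /aesub set0D measure0. Qed.

Lemma Jk0 : P1 P -> Jk mu P kappa set0 = 0.
Proof. by move=> H1; rewrite /Jk H1 measure0 mule0 sube0. Qed.

Lemma PfinE {F} : measurable F -> P F < +oo -> P F = (fine (P F))%:E.
Proof. by move=> mF PF; rewrite fineK// ge0_fin_numE//; exact: HPp.1. Qed.

Lemma part_i : P1 P -> forall E, J_minimizer mu P kappa Om E -> 0 < mu E ->
  one_admissible mu P Om /\ h1 mu P Om <= kappa%:E.
Proof.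
move=> H1 E [mE [aE minE]] muE0.
have := minE set0 measurable0 aesub0; rewrite Jk0// JkE// leeBlDr// add0e => PEk.
have PEf : P E < +oo by rewrite (le_lt_trans PEk)// ltry.
have muEf : mu E < +oo by rewrite (adm_muE mE aE) ltry.
have adE : admissible_set mu P Om E by [].
split; first by exists E.
apply: (@le_trans _ _ ((fine (P E) / fine (mu E))%R%:E)).
  by apply: ereal_inf_lbound; exists E.
have fE0 : (0 < fine (mu E))%R by rewrite -lte_fin -(adm_muE mE aE).
by rewrite lee_fin ler_pdivrMr// -lee_fin -(PfinE mE PEf).
Qed.

Lemma part_ii : P4 mu P -> P5 mu P ->
  one_admissible mu P Om -> h1 mu P Om < kappa%:E ->
  exists E, J_minimizer mu P kappa Om E /\ 0 < mu E.
Proof.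
move=> H4 H5 _ /ereal_inf_lt[_ [G [mG [aG [muG0 [muGf PGf]]]] <-]].
have fG0 : (0 < fine (mu G))%R by rewrite -lte_fin -(adm_muE mG aG).
rewrite lte_fin ltr_pdivrMr// => ltG.
have JG : Jk mu P kappa G < 0.
  by rewrite JkE// (PfinE mG PGf) -EFinB lte_fin subr_lt0.
have [E [mE [aE minE]]] : exists E, J_minimizer mu P kappa Om E := exists_min H4 H5.
exists E; split; first by [].
rewrite lt0e measure_ge0 andbT; apply/eqP => mu0.
have := le_lt_trans (minE G mG aG) JG.
rewrite /Jk mu0 mule0 sube0 => /lt_le_trans /(_ (HPp.1 E mE)).
by rewrite ltxx.
Qed.

Lemma part_iii_eq : (exists C, cheeger_set mu P Om C) -> h1 mu P Om = kappa%:E ->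
  exists E, J_minimizer mu P kappa Om E /\ 0 < mu E.
Proof.
move=> [C [[mC [aC [muC0 [muCf PCf]]]] rC]] hk.
have fC0 : (0 < fine (mu C))%R by rewrite -lte_fin -(adm_muE mC aC).
have rCk : (fine (P C) / fine (mu C))%R = kappa by apply: EFin_inj; rewrite rC hk.
exists C; split => //; split => //; split => // F mF aF.
have -> : Jk mu P kappa C = 0.
  rewrite JkE// (PfinE mC PCf) -EFinB; congr EFin.
  by rewrite -rCk divfK ?subrr// gt_eqF.
have [PFo|PFf] := eqVneq (P F) +oo.
  by rewrite JkE// PFo /= leey.
have PFf' : P F < +oo by rewrite lt_neqAle PFf leey.
have [mu0|muF0] := eqVneq (mu F) 0.
  by rewrite /Jk mu0 mule0 sube0; exact: HPp.1.
have fF0 : (0 < fine (mu F))%R.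
  by rewrite -lte_fin -(adm_muE mF aF) lt0e muF0 measure_ge0.
have adF : admissible_set mu P Om F.
  by split=> //; split=> //; split; [rewrite lt0e muF0 measure_ge0|split=> //; rewrite (adm_muE mF aF) ltry].
have : h1 mu P Om <= (fine (P F) / fine (mu F))%R%:E.
  by apply: ereal_inf_lbound; exists F.
rewrite hk lee_fin ler_pdivlMr// => kF.
by rewrite JkE// (PfinE mF PFf') -EFinB lee_fin subr_ge0.
Qed.

End helpers.

Theorem theorem4p6 (d : measure_display) (T : measurableType d) (R : realType)
  (mu : {measure set T -> \bar R}) (P : set T -> \bar R)
  (Om : set T) (kappa : R) :
  sigma_finite setT mu -> P_proper P ->
  measurable Om -> mu Om < +oo -> (0 < kappa)%R ->
  (P4 mu P -> P5 mu P -> exists E, J_minimizer mu P kappa Om E) /\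
  (P4 mu P -> P5 mu P -> P1 P ->
    ((forall E, J_minimizer mu P kappa Om E -> 0 < mu E ->
        one_admissible mu P Om /\ h1 mu P Om <= kappa%:E) /\
     (one_admissible mu P Om -> h1 mu P Om < kappa%:E ->
        exists E, J_minimizer mu P kappa Om E /\ 0 < mu E) /\
     ((exists C, cheeger_set mu P Om C) ->
        ((exists E, J_minimizer mu P kappa Om E /\ 0 < mu E) <->
         h1 mu P Om <= kappa%:E)))).
Proof.
move=> _ HPp mOm OmF k0; split; first exact: exists_min.
move=> H4 H5 H1.
have hi : forall E, J_minimizer mu P kappa Om E -> 0 < mu E ->
    one_admissible mu P Om /\ h1 mu P Om <= kappa%:E by exact: part_i.
split; first exact: hi.
split; first exact: part_ii.
move=> hC; split.
  by move=> [E [minE muE]]; have [] := hi E minE muE.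
rewrite le_eqVlt => /orP[/eqP hk|hk]; first exact: part_iii_eq.
apply: part_ii => //.
by case: hC => C [adC _]; exists C.
Qed.
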